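(* Let $k\in\mathbb{N}$, $n>2k+8$ and $q\ge q_{JL}(k)$, and let $(y,z)$ be the functions associated with the unique global solution $v$ of $(E_v)$. Then the orbit $\{(y(t),z(t)):t\in\mathbb{R}\}$ coincides with the graph of an increasing function $z=z(y)$, and \[ \lim_{t\to+\infty}(y(t),z(t))=O_2:=\Big(\frac{q-k}{a}\tilde\lambda,\ \tilde\lambda\Big). \]
   Context: $q_{JL}(k)=k\,\dfrac{(k+1)n-2(k-1)-2\sqrt{2[(k+1)n-2k]}}{(k+1)n-2k(k+3)-2\sqrt{2[(k+1)n-2k]}}$ for $n>2k+8$ (this exceeds $q^*(k)=\frac{(n+2)k}{n-2k}$). $\tilde\lambda=\tau^k(n-2k-k\tau)$ with $\tau=\frac{2k}{q-k}$, and $a=q(n-2k)-nk$. Problem $(E_v)$ is $\big(s^{n-k}(v')^k\big)'=\tilde\lambda s^{n-1}(-v)^q$ for $s>0$, $v(0)=-1$, $v'(0)=0$, with unique global solution $v\in C^2((0,\infty))\cap C^1([0,\infty))$. With $s=e^t$ and $\frac{dv}{dt}$ the derivative of $t\mapsto v(e^t)$, $y(t)=(\frac{dv}{dt})^k e^{\frac{2k^2}{q-k}t}$, $z(t)=\tilde\lambda e^{\frac{2kq}{q-k}t}(-v(e^t))^q$; they solve $y'=z-\frac{a}{q-k}y$, $z'=\frac{2kq}{q-k}z-q\tilde\lambda^{1/q}y^{1/k}z^{1-1/q}$, whose stationary points are $O_1=(0,0)$ and $O_2$. *)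

(* Defs.v *)
From Stdlib Require Import Reals.
Open Scope R_scope.

Definition qJL (k n : nat) : R :=
  let K := INR k in let N := INR n in
  K * (((K + 1) * N - 2 * (K - 1) - 2 * sqrt (2 * ((K + 1) * N - 2 * K)))
       / ((K + 1) * N - 2 * K * (K + 3) - 2 * sqrt (2 * ((K + 1) * N - 2 * K)))).

Definition tau (k : nat) (q : R) : R := 2 * INR k / (q - INR k).

Definition lamt (k n : nat) (q : R) : R :=
  (tau k q) ^ k * (INR n - 2 * INR k - INR k * tau k q).

Definition acoef (k n : nat) (q : R) : R := q * (INR n - 2 * INR k) - INR n * INR k.

(* v is a global solution of (E_v) with first and second derivatives dv, d2v:
   v in C^2((0,oo)) /\ C^1([0,oo)), v(0) = -1, v'(0) = 0, and
   (s^(n-k) (v')^k)' = lamt s^(n-1) (-v)^q for s > 0.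
   Since (-v)^q appears with real q, v < 0 on [0,oo) is part of being a solution. *)
Definition is_global_solution (k n : nat) (q : R) (v dv d2v : R -> R) : Prop :=
  (forall s, 0 < s -> derivable_pt_lim v s (dv s)) /\
  (forall s, 0 < s -> derivable_pt_lim dv s (d2v s)) /\
  (forall s, 0 < s -> continuity_pt d2v s) /\
  (* C^1 up to s = 0: right derivative of v at 0 is dv 0, dv right-continuous at 0 *)
  limit1_in (fun s => (v s - v 0) / s) (fun s => 0 < s) (dv 0) 0 /\
  limit1_in dv (fun s => 0 < s) (dv 0) 0 /\
  v 0 = -1 /\ dv 0 = 0 /\
  (forall s, 0 <= s -> v s < 0) /\
  (forall s, 0 < s ->
     derivable_pt_lim (fun r => r ^ (n - k) * (dv r) ^ k) s
       (lamt k n q * s ^ (n - 1) * Rpower (- v s) q)).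

(* y(t) = (d/dt v(e^t))^k e^{2k^2 t/(q-k)}, where d/dt v(e^t) = e^t v'(e^t). *)
Definition yfun (k : nat) (q : R) (dv : R -> R) (t : R) : R :=
  (exp t * dv (exp t)) ^ k * exp (2 * INR k ^ 2 / (q - INR k) * t).

Definition zfun (k n : nat) (q : R) (v : R -> R) (t : R) : R :=
  lamt k n q * exp (2 * INR k * q / (q - INR k) * t) * Rpower (- v (exp t)) q.

Definition lim_pinfty (f : R -> R) (l : R) : Prop :=
  forall eps, 0 < eps -> exists T, forall t, T < t -> Rabs (f t - l) < eps.

(* Main.v *)
Require Import Defs.
From Stdlib Require Import Reals Lra Lia Psatz Classical ClassicalEpsilon.
Open Scope R_scope.

Lemma D_ext (f g : R -> R) x l : (forall y, f y = g y) ->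
  derivable_pt_lim f x l -> derivable_pt_lim g x l.
Proof.
  intros E H eps He. destruct (H eps He) as [d Hd]. exists d. intros h Hh Hh2.
  rewrite <- !E. now apply Hd.
Qed.

Lemma D_eq (f : R -> R) x l l' : l = l' -> derivable_pt_lim f x l -> derivable_pt_lim f x l'.
Proof. intros ->; auto. Qed.

Lemma D_comp (f g : R -> R) x l1 l2 : derivable_pt_lim f x l1 ->
  derivable_pt_lim g (f x) l2 -> derivable_pt_lim (fun t => g (f t)) x (l2 * l1).
Proof. intros H1 H2. exact (derivable_pt_lim_comp f g x l1 l2 H1 H2). Qed.

Lemma D_mult (f g : R -> R) x l1 l2 : derivable_pt_lim f x l1 ->
  derivable_pt_lim g x l2 -> derivable_pt_lim (fun t => f t * g t) x (l1 * g x + f x * l2).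
Proof. intros H1 H2. exact (derivable_pt_lim_mult f g x l1 l2 H1 H2). Qed.

Lemma D_plus (f g : R -> R) x l1 l2 : derivable_pt_lim f x l1 ->
  derivable_pt_lim g x l2 -> derivable_pt_lim (fun t => f t + g t) x (l1 + l2).
Proof. intros H1 H2. exact (derivable_pt_lim_plus f g x l1 l2 H1 H2). Qed.

Lemma D_minus (f g : R -> R) x l1 l2 : derivable_pt_lim f x l1 ->
  derivable_pt_lim g x l2 -> derivable_pt_lim (fun t => f t - g t) x (l1 - l2).
Proof. intros H1 H2. exact (derivable_pt_lim_minus f g x l1 l2 H1 H2). Qed.

Lemma D_const (a x : R) : derivable_pt_lim (fun _ => a) x 0.
Proof. exact (derivable_pt_lim_const a x). Qed.

Lemma D_id (x : R) : derivable_pt_lim (fun t => t) x 1.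
Proof. exact (derivable_pt_lim_id x). Qed.

Lemma D_scal (f : R -> R) a x l : derivable_pt_lim f x l ->
  derivable_pt_lim (fun t => a * f t) x (a * l).
Proof. intros H. exact (derivable_pt_lim_scal f a x l H). Qed.

Lemma D_lin (a b x : R) : derivable_pt_lim (fun t => a * t + b) x a.
Proof.
  apply D_eq with (a * 1 + 0). ring. apply D_plus. apply D_scal, D_id. apply D_const.
Qed.

Lemma D_exp (f : R -> R) x l : derivable_pt_lim f x l ->
  derivable_pt_lim (fun t => exp (f t)) x (exp (f x) * l).
Proof. intros H. apply D_comp; auto. apply derivable_pt_lim_exp. Qed.

Lemma D_ln (f : R -> R) x l : 0 < f x -> derivable_pt_lim f x l ->
  derivable_pt_lim (fun t => ln (f t)) x (/ f x * l).
Proof. intros Hp H. apply D_comp; auto. now apply derivable_pt_lim_ln. Qed.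

Lemma cont_of_D (f : R -> R) x l : derivable_pt_lim f x l -> continuity_pt f x.
Proof. intros H. apply derivable_continuous_pt. exists l. exact H. Qed.

Lemma cont_nbhd (f : R -> R) x : continuity_pt f x ->
  forall eps, 0 < eps -> exists d, 0 < d /\ forall r, Rabs (r - x) < d -> Rabs (f r - f x) < eps.
Proof.
  intros H eps He. destruct (H eps He) as [d [Hd Hd2]]. exists d. split; auto.
  intros r Hr. destruct (Req_dec r x) as [->|Hne].
  - rewrite Rminus_diag, Rabs_R0; auto.
  - apply (Hd2 r). split. unfold D_x, no_cond. split; auto. exact Hr.
Qed.

Lemma cont_pos (f : R -> R) x : continuity_pt f x -> 0 < f x ->
  exists d, 0 < d /\ forall r, Rabs (r - x) < d -> 0 < f r.
Proof.
  intros H Hp. destruct (cont_nbhd f x H (f x) Hp) as [d [Hd H2]].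
  exists d; split; auto. intros r Hr. specialize (H2 r Hr).
  apply Rabs_def2 in H2. lra.
Qed.

Lemma deriv_sign (f : R -> R) x l : derivable_pt_lim f x l -> 0 < l -> f x = 0 ->
  exists d, 0 < d /\ (forall r, x - d < r < x -> f r < 0) /\ (forall r, x < r < x + d -> 0 < f r).
Proof.
  intros H Hl H0. destruct (H (l/2) ltac:(lra)) as [[d Hd] Hd2]. exists d; split; auto.
  split; intros r Hr.
  - assert (Hh : r - x <> 0) by lra. assert (Hh2 : Rabs (r - x) < d) by (rewrite Rabs_left; lra).
    specialize (Hd2 (r - x) Hh Hh2). replace (x + (r - x)) with r in Hd2 by ring.
    rewrite H0 in Hd2. apply Rabs_def2 in Hd2. destruct Hd2 as [_ Hd2].
    assert (E : f r = ((f r - 0) / (r - x)) * (r - x)) by (field; lra).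
    rewrite E. apply Rmult_lt_reg_r with (/ (x - r)).
    apply Rinv_0_lt_compat; lra. rewrite Rmult_0_l.
    replace ((f r - 0) / (r - x) * (r - x) * / (x - r)) with (- ((f r - 0) / (r - x))) by (field; lra).
    lra.
  - assert (Hh : r - x <> 0) by lra. assert (Hh2 : Rabs (r - x) < d) by (rewrite Rabs_right; lra).
    specialize (Hd2 (r - x) Hh Hh2). replace (x + (r - x)) with r in Hd2 by ring.
    rewrite H0 in Hd2. apply Rabs_def2 in Hd2. destruct Hd2 as [_ Hd2].
    assert (E : f r = ((f r - 0) / (r - x)) * (r - x)) by (field; lra).
    rewrite E. apply Rmult_lt_0_compat; lra.
Qed.

Lemma mvt (f df : R -> R) a b : a < b ->
  (forall x, a <= x <= b -> derivable_pt_lim f x (df x)) ->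
  exists c, a <= c <= b /\ f b - f a = df c * (b - a).
Proof.
  intros Hab H.
  pose (pr1 := fun c (P : a < c < b) => exist (fun l => derivable_pt_lim f c l) (df c) (H c ltac:(lra))).
  pose (pr2 := fun c (P : a < c < b) => exist (fun l => derivable_pt_lim id c l) 1 (derivable_pt_lim_id c)).
  destruct (MVT f id a b pr1 pr2 Hab) as [c [P Hc]].
  - intros c Hc. apply (cont_of_D f c (df c)). apply H; lra.
  - intros c Hc. apply derivable_continuous_pt. exists 1. apply derivable_pt_lim_id.
  - exists c. split. lra. simpl in Hc. unfold id in Hc. lra.
Qed.

Lemma incr_strict (f df : R -> R) a b : a < b ->
  (forall x, a <= x <= b -> derivable_pt_lim f x (df x)) ->
  (forall x, a <= x <= b -> 0 < df x) -> f a < f b.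
Proof.
  intros Hab H Hp. destruct (mvt f df a b Hab H) as [c [Hc E]].
  assert (0 < df c * (b - a)) by (apply Rmult_lt_0_compat; [apply Hp; lra | lra]). lra.
Qed.

Lemma incr_weak (f df : R -> R) a b : a <= b ->
  (forall x, a <= x <= b -> derivable_pt_lim f x (df x)) ->
  (forall x, a <= x <= b -> 0 <= df x) -> f a <= f b.
Proof.
  intros Hab H Hp. destruct (Req_dec a b) as [->|Hne]. lra.
  destruct (mvt f df a b ltac:(lra) H) as [c [Hc E]].
  assert (0 <= df c * (b - a)) by (apply Rmult_le_pos; [apply Hp; lra | lra]). lra.
Qed.

Lemma exp_pow (x : R) (n : nat) : exp (INR n * x) = exp x ^ n.
Proof.
  induction n. simpl. rewrite Rmult_0_l. apply exp_0.
  rewrite S_INR, Rmult_plus_distr_r, exp_plus, IHn, Rmult_1_l. simpl. ring.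
Qed.

Lemma one_minus_exp (x : R) : 1 - exp x <= - x.
Proof. pose proof (exp_ineq1_le x). lra. Qed.

Lemma exp_minus_one_le (x : R) : 0 <= x -> exp x - 1 <= x * exp x.
Proof.
  intros Hx. pose proof (exp_ineq1_le (-x)).
  assert (exp (-x) * exp x = 1) by (rewrite <- exp_plus; replace (-x + x) with 0 by ring; apply exp_0).
  pose proof (exp_pos x). nra.
Qed.

Lemma Rdiv_le_0_compat' (a b : R) : 0 <= a -> 0 < b -> 0 <= a / b.
Proof. intros. unfold Rdiv. apply Rmult_le_pos; auto. left; now apply Rinv_0_lt_compat. Qed.

Lemma exp_le_mono (x y : R) : x <= y -> exp x <= exp y.
Proof. intros H. destruct (Req_dec x y) as [->|E]. lra. left; apply exp_increasing; lra. Qed.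

Lemma exp_near (x : R) : Rabs x <= 1/2 -> Rabs (exp x - 1) <= 2 * Rabs x.
Proof.
  intros H. pose proof (exp_ineq1_le x). pose proof (exp_ineq1_le (-x)).
  assert (E : exp x * exp (- x) = 1) by (rewrite <- exp_plus; replace (x + - x) with 0 by ring; apply exp_0).
  pose proof (exp_pos x). assert (Hx1 : -(1/2) <= x) by (pose proof (Rle_abs (-x)); rewrite Rabs_Ropp in *; lra). assert (Hx2 : x <= 1/2) by (pose proof (Rle_abs x); lra).
  apply Rabs_le. destruct (Rle_or_lt 0 x) as [h|h].
  - rewrite Rabs_right by lra. split. lra.
    assert (exp x * (1 - x) <= 1) by nra. nra.
  - rewrite Rabs_left by lra. split. lra. assert (exp x * (1 - x) <= 1) by nra. nra.
Qed.

Lemma first_exit_fwd (g : R -> R) t0 t1 :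
  (forall t, continuity_pt g t) -> t0 <= t1 -> 0 <= g t0 -> g t1 < 0 ->
  exists m, t0 <= m < t1 /\ g m = 0 /\ forall r, m < r <= t1 -> g r < 0.
Proof.
  intros Hc H01 Hg0 Hg1.
  pose (E := fun t => t0 <= t <= t1 /\ 0 <= g t).
  assert (bE : bound E) by (exists t1; intros t [Ht _]; lra).
  assert (nE : exists x, E x) by (exists t0; split; [lra|auto]).
  destruct (completeness E bE nE) as [m [Hub Hlub]].
  assert (Hm0 : t0 <= m) by (apply Hub; split; [lra|auto]).
  assert (Hm1 : m <= t1) by (apply Hlub; intros t [Ht _]; lra).
  assert (Hright : forall r, m < r <= t1 -> g r < 0).
  { intros r Hr. destruct (Rlt_or_le (g r) 0) as [h|h]; auto.
    assert (E r) by (split; [lra|auto]). specialize (Hub r H). lra. }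
  assert (Hgm : 0 <= g m).
  { destruct (Rlt_or_le (g m) 0) as [h|h]; auto.
    destruct (cont_pos (fun t => - g t) m) as [d [Hd Hd2]].
    { apply continuity_pt_opp. apply Hc. } lra.
    destruct (classic (exists t, E t /\ m - d < t)) as [[t [Et Ht]]|Hn].
    - assert (t <= m) by (apply Hub; auto). specialize (Hd2 t ltac:(apply Rabs_def1; lra)).
      destruct Et. lra.
    - assert (m <= m - d). { apply Hlub. intros t Et. destruct (Rle_or_lt t (m - d)); auto.
        exfalso; apply Hn; exists t; auto. } lra. }
  assert (Hmt1 : m < t1) by (destruct (Req_dec m t1); subst; lra).
  destruct (Rle_lt_or_eq_dec 0 (g m) Hgm) as [Hpos|Hz].
  - destruct (cont_pos g m (Hc m) Hpos) as [d [Hd Hd2]].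
    pose (r := Rmin (m + d/2) t1).
    assert (m < r <= t1) by (unfold r; apply Rmin_case_strong; intros; lra).
    assert (0 < g r) by (apply Hd2; unfold r; apply Rabs_def1; apply Rmin_case_strong; intros; lra).
    specialize (Hright r H). lra.
  - exists m. repeat split; auto.
Qed.

Lemma core_neg (eta zeta : R -> R) (A B k1 k2 : R) :
  0 < A -> 0 < B -> 0 < k2 -> k2 < k1 ->
  (forall t, derivable_pt_lim eta t (A * (exp (zeta t - eta t) - 1))) ->
  (forall t, derivable_pt_lim zeta t (B * (1 + exp (k1 * eta t - k2 * zeta t)))) ->
  False.
Proof.
  intros HA HB Hk2 Hk12 Deta Dzeta.
  set (gam := (1 + k2) / (1 + k1)).
  set (ep := (k1 - k2) / (1 + k1)).
  assert (Hep : 0 < ep) by (unfold ep; apply Rdiv_lt_0_compat; lra).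
  assert (Hg1 : 1 - gam = ep) by (unfold gam, ep; field; lra).
  assert (Hg2 : k1 * gam - k2 = ep) by (unfold gam, ep; field; lra).
  assert (Hgam : 0 < gam < 1) by (unfold gam; split; [apply Rdiv_lt_0_compat; lra|];
     apply (Rmult_lt_reg_r (1 + k1)); [lra|]; unfold Rdiv; rewrite Rmult_assoc, Rinv_l; lra).
  assert (Dz_ge : forall t, B <= B * (1 + exp (k1 * eta t - k2 * zeta t))).
  { intros t. pose proof (exp_pos (k1 * eta t - k2 * zeta t)). nra. }
  set (t0 := Rabs (zeta 0) / B).
  assert (Ht0 : 0 <= t0) by (unfold t0; apply Rdiv_le_0_compat'; [apply Rabs_pos|lra]).
  assert (Zpos : forall t, t0 <= t -> 0 <= zeta t).
  { intros t Ht. assert (zeta 0 + B * t <= zeta t).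
    { destruct (Req_dec t 0) as [->|Hn]. lra.
      destruct (mvt zeta (fun t => B * (1 + exp (k1 * eta t - k2 * zeta t))) 0 t ltac:(lra))
        as [c [Hc Ec]]. intros; apply Dzeta. specialize (Dz_ge c). nra. }
    assert (B * t0 = Rabs (zeta 0)) by (unfold t0; field; lra).
    pose proof (Rle_abs (- zeta 0)) as HH; rewrite Rabs_Ropp in HH. nra. }
  set (C := Rmin (eta t0 - gam * zeta t0) (ln (A / (A + 2 * B)) - 1)).
  assert (HCle : C <= ln (A / (A + 2 * B)) - 1) by apply Rmin_r.
  assert (Hln : ln (A / (A + 2 * B)) < 0).
  { rewrite <- ln_1. apply ln_increasing. apply Rdiv_lt_0_compat; lra.
    apply (Rmult_lt_reg_r (A + 2*B)); [lra|]. unfold Rdiv; rewrite Rmult_assoc, Rinv_l; lra. }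
  assert (HC0 : C <= 0) by lra.
  assert (HeC : A + 2 * B < A * exp (- C)).
  { assert (exp (1 - ln (A / (A + 2 * B))) <= exp (- C)).
    { destruct (Req_dec (1 - ln (A / (A + 2 * B))) (- C)) as [E|E]. rewrite E; lra.
      left; apply exp_increasing; lra. }
    unfold Rminus in H; rewrite exp_plus in H. rewrite exp_Ropp, exp_ln in H by (apply Rdiv_lt_0_compat; lra).
    assert (Hinv : / (A / (A + 2 * B)) = (A + 2 * B) / A) by (field; lra).
    rewrite Hinv in H. pose proof (exp_ineq1 1 ltac:(lra)).
    assert ((A + 2 * B) / A * A = A + 2 * B) by (field; lra).
    assert (0 < (A + 2 * B) / A) by (apply Rdiv_lt_0_compat; lra). nra. }
  set (g := fun t => eta t - gam * zeta t - C).
  assert (Dg : forall t, derivable_pt_lim g t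
     (A * (exp (zeta t - eta t) - 1) - gam * (B * (1 + exp (k1 * eta t - k2 * zeta t))))).
  { intros t. unfold g. eapply D_eq; [|apply D_minus; [apply D_minus|]]. 2:{ apply Deta. } 2:{ apply D_scal, Dzeta. } 2:{ apply D_const. } ring. }
  assert (Ginv : forall t, t0 <= t -> 0 <= g t).
  { intros t Ht. destruct (Rlt_or_le (g t) 0) as [Hlt|]; auto. exfalso.
    destruct (first_exit_fwd g t0 t) as [m [Hm [Hgm Hr]]]; auto.
    - intros x. eapply cont_of_D. apply Dg.
    - unfold g, C. pose proof (Rmin_l (eta t0 - gam * zeta t0) (ln (A / (A + 2 * B)) - 1)). lra.
    - (* derivative positive at m *)
      assert (Hz : 0 <= zeta m) by (apply Zpos; lra).
      assert (He : eta m = gam * zeta m + C) by (unfold g in Hgm; lra).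
      set (X := exp (ep * zeta m)).
      assert (HX : 1 <= X). { unfold X. rewrite <- exp_0. destruct (Req_dec (ep * zeta m) 0) as [E|E].
        rewrite E; lra. left; apply exp_increasing. nra. }
      assert (E1 : exp (zeta m - eta m) = X * exp (- C)).
      { unfold X. rewrite <- exp_plus. f_equal. rewrite He. rewrite <- Hg1. ring. }
      assert (E2 : exp (k1 * eta m - k2 * zeta m) <= X).
      { unfold X. replace (k1 * eta m - k2 * zeta m) with (ep * zeta m + k1 * C)
          by (rewrite He, <- Hg2; ring).
        rewrite exp_plus. pose proof (exp_pos (ep * zeta m)).
        assert (exp (k1 * C) <= 1). { rewrite <- exp_0. destruct (Req_dec (k1 * C) 0) as [E|E].
          rewrite E; lra. left; apply exp_increasing. nra. } nra. }
      assert (Hpos : 0 < A * (exp (zeta m - eta m) - 1) - gam * (B * (1 + exp (k1 * eta m - k2 * zeta m)))).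
      { rewrite E1. pose proof (exp_pos (k1 * eta m - k2 * zeta m)).
        assert (gam * (B * (1 + exp (k1 * eta m - k2 * zeta m))) <= 2 * B * X).
        { assert (gam * (B * (1 + exp (k1 * eta m - k2 * zeta m))) <= B * (1 + exp (k1 * eta m - k2 * zeta m))).
          { assert (0 < B * (1 + exp (k1 * eta m - k2 * zeta m))) by nra. nra. }
          assert (B * (1 + exp (k1 * eta m - k2 * zeta m)) <= B * (1 + X)) by nra. nra. }
        assert (A * (X * exp (- C)) > (A + 2 * B) * X) by nra. nra. }
      destruct (deriv_sign g m _ (Dg m) Hpos Hgm) as [d [Hd [_ Hd2]]].
      set (r := Rmin (m + d/2) t).
      assert (m < r <= t) by (unfold r; apply Rmin_case_strong; intros; lra).
      specialize (Hr r H). assert (0 < g r) by (apply Hd2; unfold r; apply Rmin_case_strong; intros; lra).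
      lra. }
  (* phi = exp(-ep zeta) decreases linearly *)
  set (mu := ep * B * exp (k1 * C)).
  assert (Hmu : 0 < mu) by (unfold mu; pose proof (exp_pos (k1 * C)); apply Rmult_lt_0_compat; nra).
  set (phi := fun t => exp (- ep * zeta t)).
  assert (Dphi : forall t, derivable_pt_lim phi t
      (exp (- ep * zeta t) * (- ep * (B * (1 + exp (k1 * eta t - k2 * zeta t)))))).
  { intros t. unfold phi. apply (D_exp (fun t => - ep * zeta t)). apply D_scal, Dzeta. }
  assert (Dphi_le : forall t, t0 <= t ->
     exp (- ep * zeta t) * (- ep * (B * (1 + exp (k1 * eta t - k2 * zeta t)))) <= - mu).
  { intros t Ht. specialize (Ginv t Ht). unfold g in Ginv.
    assert (Hk : ep * zeta t + k1 * C <= k1 * eta t - k2 * zeta t).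
    { rewrite <- Hg2. nra. }
    assert (exp (ep * zeta t + k1 * C) <= exp (k1 * eta t - k2 * zeta t)).
    { destruct (Req_dec (ep * zeta t + k1 * C) (k1 * eta t - k2 * zeta t)) as [E|E].
      rewrite E; lra. left; apply exp_increasing; lra. }
    rewrite exp_plus in H.
    assert (Einv : exp (- ep * zeta t) * exp (ep * zeta t) = 1)
      by (rewrite <- exp_plus; replace (- ep * zeta t + ep * zeta t) with 0 by ring; apply exp_0).
    pose proof (exp_pos (- ep * zeta t)). pose proof (exp_pos (ep * zeta t)).
    pose proof (exp_pos (k1 * C)).
    unfold mu.
    assert (exp (- ep * zeta t) * (ep * (B * exp (k1 * eta t - k2 * zeta t))) >=
            exp (- ep * zeta t) * (ep * (B * (exp (ep * zeta t) * exp (k1 * C))))).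
    { apply Rle_ge. apply Rmult_le_compat_l; [lra|]. apply Rmult_le_compat_l; [lra|]. nra. }
    assert (exp (- ep * zeta t) * (ep * (B * (exp (ep * zeta t) * exp (k1 * C)))) = ep * B * exp (k1 * C)).
    { replace (exp (- ep * zeta t) * (ep * (B * (exp (ep * zeta t) * exp (k1 * C)))))
         with ((exp (- ep * zeta t) * exp (ep * zeta t)) * (ep * B * exp (k1 * C))) by ring.
      rewrite Einv; ring. }
    assert (0 <= exp (- ep * zeta t) * (ep * B)) by (apply Rmult_le_pos; [lra| nra]).
    nra. }
  set (t2 := t0 + phi t0 / mu + 1).
  destruct (mvt phi _ t0 t2 ltac:(unfold t2; assert (0 <= phi t0 / mu) by
     (apply Rdiv_le_0_compat'; [unfold phi; left; apply exp_pos | lra]); lra)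
     (fun x _ => Dphi x)) as [c [Hc Ec]].
  specialize (Dphi_le c ltac:(lra)).
  assert (phi t2 - phi t0 <= - mu * (t2 - t0)) by nra.
  assert (mu * (t2 - t0) = phi t0 + mu) by (unfold t2; field; lra).
  assert (0 < phi t2) by (unfold phi; apply exp_pos). lra.
Qed.

Lemma first_exit_bwd (g1 g2 : R -> R) t0 t1 :
  (forall t, continuity_pt g1 t) -> (forall t, continuity_pt g2 t) ->
  (forall t, t <= t0 -> 0 < g1 t /\ 0 < g2 t) -> ~ (0 < g1 t1 /\ 0 < g2 t1) ->
  exists m, t0 < m /\ (forall r, r < m -> 0 < g1 r /\ 0 < g2 r) /\
    0 <= g1 m /\ 0 <= g2 m /\ (g1 m = 0 \/ g2 m = 0).
Proof.
  intros C1 C2 H0 H1.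
  assert (Ht01 : t0 < t1) by (destruct (Rle_or_lt t1 t0) as [h|h]; auto; exfalso; apply H1, H0, h).
  pose (E := fun t => t <= t1 /\ forall r, r <= t -> 0 < g1 r /\ 0 < g2 r).
  assert (bE : bound E) by (exists t1; intros t [Ht _]; lra).
  assert (nE : exists x, E x) by (exists t0; split; [lra|auto]).
  destruct (completeness E bE nE) as [m [Hub Hlub]].
  assert (Hm0 : t0 <= m) by (apply Hub; split; [lra|auto]).
  assert (Hm1 : m <= t1) by (apply Hlub; intros t [Ht _]; lra).
  assert (Hleft : forall r, r < m -> 0 < g1 r /\ 0 < g2 r).
  { intros r Hr. destruct (classic (exists t, E t /\ r < t)) as [[t [[_ Et] Ht]]|Hn].
    - apply Et; lra.
    - assert (m <= r). { apply Hlub. intros t Et. destruct (Rle_or_lt t r); auto.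
        exfalso; apply Hn; exists t; auto. } lra. }
  assert (Hclos : forall g : R -> R, (forall t, continuity_pt g t) ->
            (forall r, r < m -> 0 < g r) -> 0 <= g m).
  { intros g Cg Hg. destruct (Rlt_or_le (g m) 0) as [h|h]; auto.
    destruct (cont_pos (fun t => - g t) m) as [d [Hd Hd2]].
    { apply continuity_pt_opp. apply Cg. } lra.
    specialize (Hd2 (m - d/2) ltac:(apply Rabs_def1; lra)). specialize (Hg (m - d/2) ltac:(lra)). lra. }
  assert (G1 : 0 <= g1 m) by (apply Hclos; auto; intros r Hr; apply Hleft; auto).
  assert (G2 : 0 <= g2 m) by (apply Hclos; auto; intros r Hr; apply Hleft; auto).
  exists m. split; [|split; [auto|split; [auto|split; [auto|]]]].
  - destruct (Req_dec t0 m) as [E0|E0]; [|lra]. subst m.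
    (* then g1 t0, g2 t0 > 0 and continuity extends *)
    exfalso. destruct (H0 t0 ltac:(lra)) as [a b].
    destruct (cont_pos g1 t0 (C1 t0) a) as [d1 [Hd1 Hd1']].
    destruct (cont_pos g2 t0 (C2 t0) b) as [d2 [Hd2 Hd2']].
    set (r := Rmin (t0 + Rmin d1 d2 / 2) t1).
    assert (Hr : t0 < r <= t1) by (unfold r; apply Rmin_case_strong; intros; [|lra];
       pose proof (Rmin_l d1 d2); pose proof (Rmin_r d1 d2);
       assert (0 < Rmin d1 d2) by (apply Rmin_case; lra); lra).
    assert (E r). { split; [lra|]. intros x Hx. destruct (Rle_or_lt x t0) as [hx|hx]. apply H0; auto.
      pose proof (Rmin_l d1 d2); pose proof (Rmin_r d1 d2).
      assert (r <= t0 + Rmin d1 d2 / 2) by (unfold r; apply Rmin_l).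
      split; [apply Hd1'|apply Hd2']; apply Rabs_def1; lra. }
    specialize (Hub r H). lra.
  - destruct (Req_dec (g1 m) 0) as [e|e]; [now left|].
    destruct (Req_dec (g2 m) 0) as [e'|e']; [now right|]. exfalso.
    assert (a : 0 < g1 m) by lra. assert (b : 0 < g2 m) by lra.
    destruct (Req_dec m t1) as [Em|Em]. { subst m. apply H1; auto. }
    destruct (cont_pos g1 m (C1 m) a) as [d1 [Hd1 Hd1']].
    destruct (cont_pos g2 m (C2 m) b) as [d2 [Hd2 Hd2']].
    set (r := Rmin (m + Rmin d1 d2 / 2) t1).
    assert (0 < Rmin d1 d2) by (apply Rmin_case; lra).
    assert (Hr : m < r <= t1) by (unfold r; apply Rmin_case_strong; intros; lra).
    assert (E r). { split; [lra|]. intros x Hx. destruct (Rlt_or_le x m) as [hx|hx]. apply Hleft; auto.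
      pose proof (Rmin_l d1 d2); pose proof (Rmin_r d1 d2).
      assert (r <= m + Rmin d1 d2 / 2) by (unfold r; apply Rmin_l).
      split; [apply Hd1'|apply Hd2']; apply Rabs_def1; lra. }
    specialize (Hub r H2). lra.
Qed.

Section Pos.
Variables (eta zeta : R -> R) (A B k1 k2 th : R).
Hypotheses (HA : 0 < A) (HB : 0 < B) (Hk2 : 0 < k2) (Hk12 : k2 < k1) (Hth0 : 0 < th) (Hth1 : th < 1)
  (Hcond : B * (k1 - th * k2) <= A * th * (1 - th))
  (Deta : forall t, derivable_pt_lim eta t (A * (exp (zeta t - eta t) - 1)))
  (Dzeta : forall t, derivable_pt_lim zeta t (B * (1 - exp (k1 * eta t - k2 * zeta t)))).

Lemma core_pos_inv : (exists t0, forall t, t <= t0 -> eta t < zeta t /\ zeta t < th * eta t) ->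
  forall t, eta t < zeta t /\ zeta t < th * eta t.
Proof.
  intros [t0 Ht0] t1. apply NNPP. intros Hn.
  set (g1 := fun t => zeta t - eta t). set (g2 := fun t => th * eta t - zeta t).
  assert (Dg1 : forall t, derivable_pt_lim g1 t (B * (1 - exp (k1 * eta t - k2 * zeta t)) - A * (exp (zeta t - eta t) - 1)))
    by (intros; unfold g1; apply D_minus; auto).
  assert (Dg2 : forall t, derivable_pt_lim g2 t (th * (A * (exp (zeta t - eta t) - 1)) - B * (1 - exp (k1 * eta t - k2 * zeta t))))
    by (intros; unfold g2; apply D_minus; auto; apply D_scal; auto).
  destruct (first_exit_bwd g1 g2 t0 t1) as [m [Hm0 [Hleft [G1 [G2 Hor]]]]].
  - intros t; eapply cont_of_D; apply Dg1.
  - intros t; eapply cont_of_D; apply Dg2.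
  - intros t Ht. destruct (Ht0 t Ht). unfold g1, g2; lra.
  - unfold g1, g2; intros [a b]; apply Hn; lra.
  - unfold g1, g2 in *.
    assert (Hem : eta m <= 0) by nra.
    destruct (Req_dec (zeta m - eta m) 0) as [E1|N1].
    + destruct (Rle_lt_or_eq_dec _ _ Hem) as [Hneg|Hz].
      *
        assert (Hp : 0 < B * (1 - exp (k1 * eta m - k2 * zeta m)) - A * (exp (zeta m - eta m) - 1)).
        { replace (zeta m - eta m) with 0 by lra. rewrite exp_0.
          replace (zeta m) with (eta m) by lra.
          assert (exp ((k1 - k2) * eta m) < 1) by (rewrite <- exp_0; apply exp_increasing; nra).
          replace (k1 * eta m - k2 * eta m) with ((k1 - k2) * eta m) by ring. nra. }
        destruct (deriv_sign g1 m _ (Dg1 m) Hp E1) as [d [Hd [Hl _]]].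
        specialize (Hl (m - d/2) ltac:(lra)). specialize (Hleft (m - d/2) ltac:(lra)).
        unfold g1 in Hl; lra.
      * (* corner: Gronwall *)
        assert (Hzm : zeta m = 0) by lra.
        set (t2 := m - 1).
        destruct (Hleft t2 ltac:(unfold t2; lra)) as [a2 b2].
        assert (Reg : forall t, t2 <= t <= m -> eta t <= zeta t /\ zeta t <= th * eta t).
        { intros t Ht. destruct (Req_dec t m) as [->|Hne]. lra. destruct (Hleft t ltac:(lra)); lra. }
        set (M0 := - eta t2).
        assert (Etainc : forall t, t2 <= t <= m -> eta t2 <= eta t).
        { intros t Ht. apply (incr_weak eta (fun t => A * (exp (zeta t - eta t) - 1))). lra.
          intros; apply Deta. intros x Hx. destruct (Reg x ltac:(lra)).
          assert (1 <= exp (zeta x - eta x)). { rewrite <- exp_0. destruct (Req_dec (zeta x - eta x) 0) as [E|E].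
            rewrite E; lra. left; apply exp_increasing; lra. } nra. }
        set (L := A * exp M0 + B * k1).
        set (D := fun t => (- eta t - zeta t) * exp (L * t)).
        assert (DD : forall t, derivable_pt_lim D t
           ((- (A * (exp (zeta t - eta t) - 1)) - B * (1 - exp (k1 * eta t - k2 * zeta t))) * exp (L * t)
            + (- eta t - zeta t) * (exp (L * t) * L))).
        { intros t. unfold D. apply (D_mult (fun t => - eta t - zeta t) (fun t => exp (L * t))).
          - apply (D_minus (fun t => - eta t) zeta). apply (D_eq _ _ (-1 * (A * (exp (zeta t - eta t) - 1)))). ring.
            apply (D_ext (fun t => -1 * eta t)). intros; ring. apply D_scal; auto. auto.
          - apply (D_exp (fun t => L * t)). apply (D_eq _ _ (L * 1)). ring. apply D_scal, D_id. }
        assert (Dge : D t2 <= D m).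
        { apply (incr_weak D (fun t => (- (A * (exp (zeta t - eta t) - 1)) - B * (1 - exp (k1 * eta t - k2 * zeta t))) * exp (L * t) + (- eta t - zeta t) * (exp (L * t) * L)) t2 m). unfold t2; lra. intros; apply DD.
          intros x Hx. destruct (Reg x Hx) as [r1 r2]. pose proof (Etainc x Hx).
          assert (Hex : eta x <= 0) by nra.
          assert (Hzx : zeta x <= 0) by nra.
          assert (B1 : exp (zeta x - eta x) - 1 <= (zeta x - eta x) * exp M0).
          { pose proof (exp_minus_one_le (zeta x - eta x) ltac:(lra)).
            assert (exp (zeta x - eta x) <= exp M0) by (apply exp_le_mono; unfold M0; lra).
            assert (0 <= zeta x - eta x) by lra. nra. }
          assert (B2 : 1 - exp (k1 * eta x - k2 * zeta x) <= - (k1 * eta x - k2 * zeta x))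
            by apply one_minus_exp.
          pose proof (exp_pos (L * x)). pose proof (exp_pos M0).
          assert (- (A * (exp (zeta x - eta x) - 1)) - B * (1 - exp (k1 * eta x - k2 * zeta x))
                  + (- eta x - zeta x) * L >= 0).
          { unfold L.
            assert ((zeta x - eta x) * exp M0 <= (- eta x - zeta x) * exp M0) by (apply Rmult_le_compat_r; lra).
            assert (A * (exp (zeta x - eta x) - 1) <= A * exp M0 * (- eta x - zeta x)) by nra.
            assert (- (k1 * eta x - k2 * zeta x) <= k1 * (- eta x - zeta x)) by nra.
            assert (B * (1 - exp (k1 * eta x - k2 * zeta x)) <= B * k1 * (- eta x - zeta x)) by nra.
            nra. }
          nra. }
        unfold D in Dge. rewrite Hzm, (proj2 (conj Hz Hz)) in Dge. rewrite <- Hz in Dge.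
        pose proof (exp_pos (L * t2)). assert (0 < - eta t2 - zeta t2) by nra. nra.
    + assert (E2 : th * eta m - zeta m = 0) by (destruct Hor; [contradiction|auto]).
      assert (Hlt : eta m < 0) by nra.
      set (sm := - eta m).
      assert (Hs : 0 < sm) by (unfold sm; lra).
      assert (Q1 : zeta m - eta m = (1 - th) * sm) by (unfold sm; lra).
      assert (Q2 : k1 * eta m - k2 * zeta m = - ((k1 - th * k2) * sm)) by (unfold sm; replace (zeta m) with (th * eta m) by lra; ring).
      assert (Hp : 0 < th * (A * (exp (zeta m - eta m) - 1)) - B * (1 - exp (k1 * eta m - k2 * zeta m))).
      { rewrite Q1, Q2.
        pose proof (exp_ineq1 ((1 - th) * sm) ltac:(nra)).
        pose proof (one_minus_exp (- ((k1 - th * k2) * sm))).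
        assert (th * A * (exp ((1 - th) * sm) - 1) > th * A * ((1 - th) * sm)).
        { apply Rmult_gt_compat_l. nra. lra. }
        assert (B * (1 - exp (- ((k1 - th * k2) * sm))) <= B * ((k1 - th * k2) * sm)) by nra.
        assert (B * ((k1 - th * k2) * sm) <= A * th * (1 - th) * sm) by nra.
        nra. }
      destruct (deriv_sign g2 m _ (Dg2 m) Hp E2) as [d [Hd [Hl _]]].
      specialize (Hl (m - d/2) ltac:(lra)). specialize (Hleft (m - d/2) ltac:(lra)).
      unfold g2 in Hl; lra.
Qed.
End Pos.

Lemma core_pos_all (eta zeta : R -> R) (A B k1 k2 th : R) :
  0 < A -> 0 < B -> 0 < k2 -> k2 < k1 -> 0 < th -> th < 1 ->
  (forall t, derivable_pt_lim eta t (A * (exp (zeta t - eta t) - 1))) ->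
  (forall t, derivable_pt_lim zeta t (B * (1 - exp (k1 * eta t - k2 * zeta t)))) ->
  (forall t, eta t < zeta t /\ zeta t < th * eta t) ->
  (forall t, 0 < A * (exp (zeta t - eta t) - 1)) /\
  (forall t, 0 < B * (1 - exp (k1 * eta t - k2 * zeta t))) /\
  (forall eps, 0 < eps -> exists T, forall t, T < t -> Rabs (eta t) < eps /\ Rabs (zeta t) < eps).
Proof.
  intros HA HB Hk2 Hk12 Hth0 Hth1 Deta Dzeta Reg.
  assert (P1 : forall t, 0 < A * (exp (zeta t - eta t) - 1)).
  { intros t. destruct (Reg t). assert (1 < exp (zeta t - eta t)) by (rewrite <- exp_0; apply exp_increasing; lra). nra. }
  assert (Neg : forall t, eta t < 0 /\ zeta t < 0) by (intros t; destruct (Reg t); split; nra).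
  assert (P2 : forall t, 0 < B * (1 - exp (k1 * eta t - k2 * zeta t))).
  { intros t. destruct (Reg t). destruct (Neg t).
    assert (exp (k1 * eta t - k2 * zeta t) < 1) by (rewrite <- exp_0; apply exp_increasing; nra). nra. }
  split; [auto|split; [auto|]].
  intros eps He.
  destruct (classic (exists T, - eps < eta T)) as [[T HT]|Hn].
  - exists T. intros t Ht.
    assert (eta T < eta t) by (apply (incr_strict eta (fun t => A * (exp (zeta t - eta t) - 1)) T t Ht); intros; [apply Deta|apply P1]).
    destruct (Reg t), (Neg t). split; rewrite Rabs_left; nra.
  - exfalso.
    assert (Hle : forall t, eta t <= - eps) by (intros t; apply Rnot_lt_le; intros h; apply Hn; exists t; lra).
    set (c := B * (1 - exp (- ((k1 - k2) * (th * eps))))).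
    assert (Hc : 0 < c). { unfold c. assert (exp (- ((k1 - k2) * (th * eps))) < 1)
      by (rewrite <- exp_0; apply exp_increasing; assert (0 < (k1 - k2) * (th * eps)) by (apply Rmult_lt_0_compat; nra); lra). nra. }
    assert (Dz : forall t, c <= B * (1 - exp (k1 * eta t - k2 * zeta t))).
    { intros t. unfold c. destruct (Reg t). specialize (Hle t).
      assert (k1 * eta t - k2 * zeta t <= - ((k1 - k2) * (th * eps))).
      { assert (zeta t <= - (th * eps)) by nra. nra. }
      pose proof (exp_le_mono _ _ H1). nra. }
    set (t3 := - zeta 0 / c + 1).
    assert (Ht3 : 0 < t3) by (unfold t3; destruct (Neg 0);
       assert (0 <= - zeta 0 / c) by (apply Rdiv_le_0_compat'; lra); lra).
    destruct (mvt zeta (fun t => B * (1 - exp (k1 * eta t - k2 * zeta t))) 0 t3 Ht3 (fun x _ => Dzeta x)) as [x [Hx Ex]].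
    specialize (Dz x). destruct (Neg t3).
    assert (c * (t3 - 0) = - zeta 0 + c) by (unfold t3; field; lra). nra.
Qed.

Lemma params (k n : nat) (q : R) : (1 <= k)%nat -> (2 * k + 8 < n)%nat -> qJL k n <= q ->
  INR k < q /\ 0 < tau k q /\ tau k q < INR n - 2 * INR k - INR k * tau k q /\
  8 * (INR n - 2 * INR k - INR k * tau k q) <=
     (INR n - 2 * INR k - INR k * tau k q - tau k q) ^ 2.
Proof.
  intros Hk Hn Hq.
  assert (HK : 1 <= INR k) by (apply (le_INR 1 k) in Hk; simpl in Hk; lra).
  assert (HN : 2 * INR k + 9 <= INR n).
  { assert (H : (2 * k + 9 <= n)%nat) by lia. apply le_INR in H.
    rewrite plus_INR, mult_INR in H. simpl in H. lra. }
  set (K := INR k) in *. set (N := INR n) in *.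
  set (M := N - 2 * K).
  set (X := (K + 1) * N - 2 * K).
  assert (HX : 0 <= 2 * X) by (unfold X; nra).
  set (S := sqrt (2 * X)).
  assert (HS : S * S = 2 * X) by (apply sqrt_sqrt; auto).
  assert (HS0 : 0 <= S) by apply sqrt_pos.
  set (P := (K + 1) * M - 4 * K).
  assert (HP : 0 < P) by (unfold P, M; nra).
  set (Den := (K + 1) * N - 2 * K * (K + 3) - 2 * S).
  assert (EDen : Den = P - 2 * S) by (unfold Den, P, M; ring).
  assert (HPS : 4 * S * S < P * P).
  { rewrite Rmult_assoc, HS.
    assert (E : P * P - 4 * (2 * X) = (K + 1) ^ 2 * M * (M - 8)) by (unfold P, X, M; ring).
    assert (0 < (K + 1) ^ 2 * M * (M - 8)) by (unfold M; apply Rmult_lt_0_compat; [apply Rmult_lt_0_compat|]; nra).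
    lra. }
  assert (HDen : 0 < Den).
  { rewrite EDen. destruct (Rle_or_lt P (2 * S)) as [h|h]; [|lra]. exfalso. nra. }
  assert (EqJL : qJL k n = K + 2 * K * (K + 1) ^ 2 / Den).
  { unfold qJL. fold K N. fold X S. fold Den.
    replace ((K + 1) * N - 2 * (K - 1) - 2 * S) with (Den + 2 * (K + 1) ^ 2) by (unfold Den; ring).
    field. lra. }
  assert (Hq' : K + 2 * K * (K + 1) ^ 2 / Den <= q) by (rewrite <- EqJL; auto).
  assert (Hpos : 0 < 2 * K * (K + 1) ^ 2 / Den) by (apply Rdiv_lt_0_compat; [nra|lra]).
  assert (HqK : K < q) by lra.
  set (t := tau k q). assert (Et : t = 2 * K / (q - K)) by reflexivity.
  assert (Ht : 0 < t) by (rewrite Et; apply Rdiv_lt_0_compat; lra).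
  assert (Htq : t * (q - K) = 2 * K) by (rewrite Et; field; lra).
  assert (Hu : (K + 1) ^ 2 * t <= Den).
  { assert (2 * K * (K + 1) ^ 2 <= Den * (q - K)).
    { assert (2 * K * (K + 1) ^ 2 / Den * Den = 2 * K * (K + 1) ^ 2) by (field; lra). nra. }
    assert (((K + 1) ^ 2 * t) * (q - K) = 2 * K * (K + 1) ^ 2) by (rewrite <- Htq; ring).
    nra. }
  set (A := N - 2 * K - K * t).
  assert (HAt : (K + 1) * (A - t) = P - (K + 1) ^ 2 * t + 4 * K) by (unfold A, P, M; ring).
  assert (HAt' : t < A) by nra.
  repeat split; auto.
  assert (Id : (K + 1) ^ 2 * ((A - t) ^ 2 - 8 * A) =
               ((K + 1) ^ 2 * t - P) ^ 2 - 4 * (S * S)).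
  { rewrite HS. unfold A, P, X, M. ring. }
  assert (0 <= ((K + 1) ^ 2 * t - P) ^ 2 - 4 * (S * S)).
  { replace (((K + 1) ^ 2 * t - P) ^ 2 - 4 * (S * S)) with
      (((K + 1) ^ 2 * t - P - 2 * S) * ((K + 1) ^ 2 * t - P + 2 * S)) by ring.
    apply Rmult_le_pos_neg_neg_le_0 || nra. }
  assert (0 < (K + 1) ^ 2) by nra.
  assert (0 <= (A - t) ^ 2 - 8 * A).
  { apply (Rmult_le_reg_l ((K + 1) ^ 2)); auto. rewrite Rmult_0_r, Id. auto. }
  replace (M - K * t) with A by (unfold A, M; ring). lra.
Qed.

Lemma pow_le1 (x : R) (m : nat) : 0 <= x <= 1 -> x ^ m <= 1.
Proof. intros H. induction m. simpl; lra. simpl. pose proof (pow_le x m ltac:(lra)). nra. Qed.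

Lemma pow_le_x (x : R) (m : nat) : 0 <= x <= 1 -> (1 <= m)%nat -> x ^ m <= x.
Proof. intros H Hm. destruct m. lia. simpl. pose proof (pow_le1 x m H). nra. Qed.

Lemma phi_nonneg (phi dphi : R -> R) (s : R) : 0 < s ->
  (forall x, 0 < x <= s -> derivable_pt_lim phi x (dphi x)) ->
  (forall x, 0 < x <= s -> 0 <= dphi x) ->
  (forall eps, 0 < eps -> exists d, 0 < d /\ forall x, 0 < x < d -> Rabs (phi x) < eps) ->
  0 <= phi s.
Proof.
  intros Hs HD Hp Hl. destruct (Rlt_or_le (phi s) 0) as [h|h]; auto. exfalso.
  destruct (Hl (- phi s) ltac:(lra)) as [d [Hd Hd2]].
  set (x := Rmin (d / 2) (s / 2)).
  assert (Hx : 0 < x < d /\ x < s) by (unfold x; apply Rmin_case_strong; intros; lra).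
  specialize (Hd2 x ltac:(lra)).
  assert (phi x <= phi s) by (apply (incr_weak phi dphi); [lra| |]; intros; [apply HD|apply Hp]; lra).
  apply Rabs_def2 in Hd2. lra.
Qed.

Section Bridge.
Variables (k n : nat) (q : R) (v dv d2v : R -> R).
Hypotheses (Hk : (1 <= k)%nat) (Hn : (2 * k + 8 < n)%nat) (Hq : qJL k n <= q)
  (Hsol : is_global_solution k n q v dv d2v).

Let K := INR k.
Let N := INR n.
Let ta := tau k q.
Let lam := lamt k n q.
Let A := N - 2 * K - K * ta.
Let B := q * ta.
Let W := fun s => s ^ (n - k) * dv s ^ k.

Lemma prm : K < q /\ 0 < ta /\ ta < A /\ 8 * A <= (A - ta) ^ 2.
Proof. exact (params k n q Hk Hn Hq). Qed.

Lemma HK1 : 1 <= K.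
Proof. unfold K. apply (le_INR 1 k) in Hk; simpl in Hk; lra. Qed.

Lemma lam_eq : lam = ta ^ k * A.
Proof. reflexivity. Qed.

Lemma Apos : 0 < A.
Proof. destruct prm as [_ [? [? _]]]. lra. Qed.

Lemma lam_pos : 0 < lam.
Proof. rewrite lam_eq. apply Rmult_lt_0_compat. apply pow_lt. apply prm. apply Apos. Qed.

Lemma ta_q : ta * (q - K) = 2 * K.
Proof. destruct prm as [h _]. unfold ta, tau. fold K. field. lra. Qed.

Lemma AB_N : A + B = N.
Proof. unfold A, B. pose proof ta_q. nra. Qed.

Lemma Bpos : 0 < B.
Proof. destruct prm as [h [h2 _]]. unfold B. pose proof HK1. nra. Qed.

Lemma DW : forall s, 0 < s -> derivable_pt_lim W s (lam * s ^ (n - 1) * Rpower (- v s) q).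
Proof. destruct Hsol as (_ & _ & _ & _ & _ & _ & _ & _ & H). exact H. Qed.

Lemma Dv : forall s, 0 < s -> derivable_pt_lim v s (dv s).
Proof. destruct Hsol as (H & _). exact H. Qed.

Lemma Ddv : forall s, 0 < s -> derivable_pt_lim dv s (d2v s).
Proof. destruct Hsol as (_ & H & _). exact H. Qed.

Lemma vneg : forall s, 0 <= s -> v s < 0.
Proof. destruct Hsol as (_ & _ & _ & _ & _ & _ & _ & H & _). exact H. Qed.

Lemma v_lim : forall eps, 0 < eps -> exists d, 0 < d /\ forall x, 0 < x < d -> Rabs (v x + 1) < eps.
Proof.
  destruct Hsol as (_ & _ & _ & H & _ & H0 & H1 & _).
  intros eps He. destruct (H 1 ltac:(lra)) as [d [Hd Hd2]].
  exists (Rmin d eps). split. apply Rmin_case; lra.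
  intros x Hx. assert (x < d /\ x < eps) by (split; [apply Rlt_le_trans with (Rmin d eps); [lra|apply Rmin_l]
                                                    |apply Rlt_le_trans with (Rmin d eps); [lra|apply Rmin_r]]).
  specialize (Hd2 x). simpl in Hd2. unfold R_dist in Hd2. rewrite H0, H1 in Hd2.
  assert (H9 : Rabs ((v x - -1) / x - 0) < 1) by (apply Hd2; split; [lra| rewrite Rminus_0_r, Rabs_right; lra]).
  replace ((v x - -1) / x - 0) with ((v x + 1) * / x) in H9 by (field; lra).
  rewrite Rabs_mult, Rabs_inv in H9. rewrite (Rabs_right x) in H9 by lra.
  apply Rmult_lt_compat_r with (r := x) in H9; [|lra].
  rewrite Rmult_assoc, Rinv_l, Rmult_1_r, Rmult_1_l in H9 by lra. lra.
Qed.

Lemma dv_lim : forall eps, 0 < eps -> exists d, 0 < d /\ forall x, 0 < x < d -> Rabs (dv x) < eps.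
Proof.
  destruct Hsol as (_ & _ & _ & _ & H & _ & H1 & _).
  intros eps He. destruct (H eps He) as [d [Hd Hd2]]. exists d. split; auto.
  intros x Hx. specialize (Hd2 x). simpl in Hd2. unfold R_dist in Hd2. rewrite H1 in Hd2.
  rewrite <- (Rminus_0_r (dv x)). apply Hd2. split; [lra|rewrite Rminus_0_r, Rabs_right; lra].
Qed.

Lemma W_lim : forall eps, 0 < eps -> exists d, 0 < d /\ forall x, 0 < x < d -> Rabs (W x) < eps.
Proof.
  intros eps He. destruct (dv_lim 1 ltac:(lra)) as [d [Hd Hd2]].
  exists (Rmin (Rmin d eps) 1). split. repeat apply Rmin_case; lra.
  intros x Hx.
  assert (x < d /\ x < eps /\ x < 1).
  { pose proof (Rmin_l (Rmin d eps) 1). pose proof (Rmin_r (Rmin d eps) 1).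
    pose proof (Rmin_l d eps). pose proof (Rmin_r d eps). lra. }
  unfold W. rewrite Rabs_mult, <- !RPow_abs. rewrite (Rabs_right x) by lra.
  specialize (Hd2 x ltac:(lra)).
  assert (Rabs (dv x) ^ k <= 1) by (apply pow_le1; split; [apply Rabs_pos|lra]).
  assert (x ^ (n - k) <= x) by (apply pow_le_x; [lra|lia]).
  pose proof (pow_le x (n - k) ltac:(lra)). pose proof (pow_le (Rabs (dv x)) k (Rabs_pos _)). nra.
Qed.

Lemma W_nonneg : forall s, 0 < s -> 0 <= W s.
Proof.
  intros s Hs. apply (phi_nonneg W (fun x => lam * x ^ (n - 1) * Rpower (- v x) q) s Hs).
  - intros x Hx; apply DW; lra.
  - intros x Hx. pose proof lam_pos. pose proof (pow_le x (n - 1) ltac:(lra)).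
    assert (0 < Rpower (- v x) q) by (unfold Rpower; apply exp_pos). 
    apply Rmult_le_pos; [apply Rmult_le_pos|]; lra.
  - apply W_lim.
Qed.

Lemma W_pos : forall s, 0 < s -> 0 < W s.
Proof.
  intros s Hs. pose proof (W_nonneg (s / 2) ltac:(lra)).
  assert (W (s / 2) < W s).
  { apply (incr_strict W (fun x => lam * x ^ (n - 1) * Rpower (- v x) q)). lra.
    intros x Hx; apply DW; lra.
    intros x Hx. pose proof lam_pos. pose proof (pow_lt x (n - 1) ltac:(lra)).
    assert (0 < Rpower (- v x) q) by (unfold Rpower; apply exp_pos).
    apply Rmult_lt_0_compat; [apply Rmult_lt_0_compat|]; lra. }
  lra.
Qed.

Lemma dv_ne0 : forall s, 0 < s -> dv s <> 0.
Proof.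
  intros s Hs E. pose proof (W_pos s Hs). unfold W in H. rewrite E in H.
  rewrite pow_i in H by lia. lra.
Qed.

Lemma dv_sign : (forall s, 0 < s -> 0 < dv s) \/ (forall s, 0 < s -> dv s < 0).
Proof.
  destruct (classic (exists s, 0 < s /\ 0 < dv s)) as [[s1 [Hs1 H1]]|Hn'].
  - left. intros s Hs. destruct (Rlt_or_le 0 (dv s)) as [h|h]; auto. exfalso.
    assert (h' : dv s < 0) by (pose proof (dv_ne0 s Hs); lra).
    destruct (Rlt_or_le s s1) as [hs|hs].
    + destruct (Ranalysis5.IVT_interv dv s s1) as [z [Hz Ez]]; auto.
      intros a Ha. eapply cont_of_D. apply Ddv. lra.
      apply (dv_ne0 z); auto; lra.
    + destruct (Req_dec s s1) as [e|e]. subst; lra.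
      destruct (Ranalysis5.IVT_interv (fun x => - dv x) s1 s) as [z [Hz Ez]]; [ | lra | lra | lra | ].
      intros a Ha. apply continuity_pt_opp. eapply cont_of_D. apply Ddv. lra.
      apply (dv_ne0 z); auto; lra.
  - right. intros s Hs. destruct (Rlt_or_le (dv s) 0) as [h|h]; auto. exfalso.
    pose proof (dv_ne0 s Hs). apply Hn'. exists s. split; auto; lra.
Qed.

Let eta := fun t => ln (W (exp t)) - A * t - K * ln ta.
Let zeta := fun t => B * t + q * ln (- v (exp t)).

Lemma nk_ge : (1 <= n - k)%nat.
Proof. lia. Qed.

Lemma Deta_ok : forall t, derivable_pt_lim eta t (A * (exp (zeta t - eta t) - 1)).
Proof.
  intros t. set (s := exp t). assert (Hs : 0 < s) by apply exp_pos.
  pose proof (W_pos s Hs) as HW.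
  assert (D1 : derivable_pt_lim (fun t => W (exp t)) t (lam * s ^ (n - 1) * Rpower (- v s) q * exp t)).
  { apply (D_comp exp W). apply derivable_pt_lim_exp. apply DW; auto. }
  unfold eta. apply (D_ext (fun t => ln (W (exp t)) - (A * t + K * ln ta))). intros; ring.
  eapply D_eq; [| apply (D_minus (fun t => ln (W (exp t))) (fun t => A * t + K * ln ta))].
  2:{ apply (D_ln (fun t => W (exp t))). exact HW. exact D1. }
  2:{ apply D_lin. }
  fold s.
  assert (E : zeta t - (ln (W s) - A * t - K * ln ta) =
              INR n * t + q * ln (- v s) + INR k * ln ta + - ln (W s)).
  { unfold zeta. fold s. assert (INR n * t = A * t + B * t) by (rewrite <- Rmult_plus_distr_r, AB_N; reflexivity).
    unfold K. lra. }
  rewrite E. rewrite !exp_plus, exp_pow, exp_Ropp, exp_ln by auto.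
  rewrite exp_pow, exp_ln by (apply prm).
  fold s. replace (exp (q * ln (- v s))) with (Rpower (- v s) q) by reflexivity.
  assert (En : s ^ n = s ^ (n - 1) * s).
  { replace n with (S (n - 1)) at 1 by lia. simpl. ring. }
  rewrite En. rewrite lam_eq. field. lra.
Qed.

Lemma dvk_pos : forall s, 0 < s -> 0 < dv s ^ k.
Proof.
  intros s Hs. pose proof (W_pos s Hs). unfold W in H. pose proof (pow_lt s (n - k) Hs).
  destruct (Rlt_or_le 0 (dv s ^ k)) as [h|h]; auto. nra.
Qed.

Lemma key_exp : forall t, exp (/ K * eta t - / q * zeta t) =
   exp t * Rabs (dv (exp t)) / (ta * (- v (exp t))).
Proof.
  intros t. set (s := exp t). assert (Hs : 0 < s) by apply exp_pos.
  assert (Ha : 0 < Rabs (dv s)) by (apply Rabs_pos_lt; apply dv_ne0; auto).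
  assert (Hu : 0 < - v s) by (pose proof (vneg s ltac:(lra)); lra).
  assert (EW : W s = s ^ (n - k) * Rabs (dv s) ^ k).
  { unfold W. rewrite RPow_abs, Rabs_right. auto. left; apply dvk_pos; auto. }
  assert (LW : ln (W s) = (INR n - INR k) * t + K * ln (Rabs (dv s))).
  { rewrite EW, ln_mult by (apply pow_lt; auto). rewrite !ln_pow by auto.
    rewrite minus_INR by lia. unfold s. rewrite ln_exp. unfold K. ring. }
  destruct prm as [HqK [Hta _]]. pose proof HK1.
  assert (E : / K * eta t - / q * zeta t = t + ln (Rabs (dv s)) + - ln ta + - ln (- v s)).
  { unfold eta, zeta. fold s. rewrite LW. unfold A, B, N. unfold K in *. field. split; lra. }
  rewrite E, !exp_plus, !exp_Ropp, !exp_ln by auto. fold s. field. split; lra.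
Qed.

Lemma Dzeta_raw : forall t, derivable_pt_lim zeta t (B - q * (exp t * dv (exp t)) / (- v (exp t))).
Proof.
  intros t. set (s := exp t). assert (Hs : 0 < s) by apply exp_pos.
  assert (Hu : 0 < - v s) by (pose proof (vneg s ltac:(lra)); lra).
  unfold zeta.
  eapply D_eq; [| apply (D_plus (fun t => B * t) (fun t => q * ln (- v (exp t))))].
  2:{ apply (D_eq _ _ (B * 1)). reflexivity. apply D_scal, D_id. }
  2:{ apply D_scal. apply (D_ln (fun t => - v (exp t))). exact Hu.
      apply (D_ext (fun t => -1 * v (exp t))). intros; ring. apply D_scal.
      apply (D_comp exp v). apply derivable_pt_lim_exp. apply Dv. auto. }
  fold s. field. lra.
Qed.

Lemma Dzeta_pos : (forall s, 0 < s -> 0 < dv s) ->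
  forall t, derivable_pt_lim zeta t (B * (1 - exp (/ K * eta t - / q * zeta t))).
Proof.
  intros Hp t. eapply D_eq; [|apply Dzeta_raw]. rewrite key_exp.
  set (s := exp t). assert (Hs : 0 < s) by apply exp_pos.
  assert (Hu : 0 < - v s) by (pose proof (vneg s ltac:(lra)); lra).
  rewrite Rabs_right by (left; apply Hp; auto).
  destruct prm as [_ [Hta _]]. unfold B. field. split; lra.
Qed.

Lemma Dzeta_neg : (forall s, 0 < s -> dv s < 0) ->
  forall t, derivable_pt_lim zeta t (B * (1 + exp (/ K * eta t - / q * zeta t))).
Proof.
  intros Hp t. eapply D_eq; [|apply Dzeta_raw]. rewrite key_exp.
  set (s := exp t). assert (Hs : 0 < s) by apply exp_pos.
  assert (Hu : 0 < - v s) by (pose proof (vneg s ltac:(lra)); lra).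
  rewrite Rabs_left by (apply Hp; auto).
  destruct prm as [_ [Hta _]]. unfold B. field. split; lra.
Qed.

Lemma ez : forall t, exp (zeta t - eta t) =
  lam * exp t ^ n * Rpower (- v (exp t)) q / (A * W (exp t)).
Proof.
  intros t. set (s := exp t). assert (Hs : 0 < s) by apply exp_pos.
  pose proof (W_pos s Hs) as HW.
  assert (E : zeta t - eta t = INR n * t + q * ln (- v s) + INR k * ln ta + - ln (W s)).
  { unfold zeta, eta. fold s. assert (INR n * t = A * t + B * t) by (rewrite <- Rmult_plus_distr_r, AB_N; reflexivity).
    unfold K. lra. }
  rewrite E. rewrite !exp_plus, exp_pow, exp_Ropp, exp_ln by auto.
  rewrite exp_pow, exp_ln by (apply prm).
  fold s. replace (exp (q * ln (- v s)) ) with (Rpower (- v s) q) by reflexivity.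
  rewrite lam_eq. pose proof Apos. field. lra.
Qed.

Section PosBranch.
Hypothesis Hp : forall s, 0 < s -> 0 < dv s.

Lemma v_gt : forall s, 0 < s -> -1 < v s /\ v s < 0.
Proof.
  assert (G : forall s, 0 < s -> 0 <= v s + 1).
  { intros s Hs. apply (phi_nonneg (fun x => v x + 1) dv s Hs).
    - intros x Hx. apply (D_eq _ _ (dv x + 0)). ring. apply (D_plus v (fun _ => 1)). apply Dv; lra. apply D_const.
    - intros x Hx. left; apply Hp; lra.
    - apply v_lim. }
  intros s Hs. split; [|apply vneg; lra].
  assert (v (s / 2) < v s) by (apply (incr_strict v dv); [lra| |]; intros; [apply Dv|apply Hp]; lra).
  specialize (G (s / 2) ltac:(lra)). lra.
Qed.

Lemma v_mono : forall x y, 0 < x -> x <= y -> v x <= v y.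
Proof. intros x y Hx Hxy. apply (incr_weak v dv); auto; intros; [apply Dv|left; apply Hp]; lra. Qed.

Lemma Rpow_lt1 : forall u, 0 < u < 1 -> Rpower u q < 1.
Proof.
  intros u Hu. unfold Rpower. rewrite <- exp_0. apply exp_increasing.
  assert (ln u < 0) by (rewrite <- ln_1; apply ln_increasing; lra).
  destruct prm as [HqK _]. pose proof HK1. nra.
Qed.

Lemma Npos : 0 < N.
Proof. pose proof AB_N. pose proof Apos. pose proof Bpos. lra. Qed.

Lemma D_pow (x : R) : derivable_pt_lim (fun y => y ^ n) x (N * x ^ (n - 1)).
Proof.
  eapply D_eq; [|apply derivable_pt_lim_pow]. unfold N. f_equal. f_equal. lia.
Qed.

Lemma small_pow : forall c, 0 < c -> forall eps, 0 < eps ->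
  exists d, 0 < d /\ forall x, 0 < x < d -> Rabs (c * x ^ n) < eps.
Proof.
  intros c Hc eps He. exists (Rmin 1 (eps / c)). split. apply Rmin_case; [lra|apply Rdiv_lt_0_compat; lra].
  intros x Hx. assert (Hx2 : x < 1 /\ x < eps / c) by (pose proof (Rmin_l 1 (eps / c)); pose proof (Rmin_r 1 (eps / c)); lra).
  assert (x ^ n <= x) by (apply pow_le_x; [lra|lia]). pose proof (pow_le x n ltac:(lra)).
  rewrite Rabs_right by nra. assert (c * x < eps).
  { destruct Hx2 as [_ Hx3]. apply Rmult_lt_compat_l with (r := c) in Hx3; auto.
    replace (c * (eps / c)) with eps in Hx3 by (field; lra). auto. }
  nra.
Qed.

Lemma sum_small (f g : R -> R) :
  (forall eps, 0 < eps -> exists d, 0 < d /\ forall x, 0 < x < d -> Rabs (f x) < eps) ->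
  (forall eps, 0 < eps -> exists d, 0 < d /\ forall x, 0 < x < d -> Rabs (g x) < eps) ->
  (forall eps, 0 < eps -> exists d, 0 < d /\ forall x, 0 < x < d -> Rabs (f x - g x) < eps).
Proof.
  intros Hf Hg eps He. destruct (Hf (eps/2) ltac:(lra)) as [d1 [H1 H1']].
  destruct (Hg (eps/2) ltac:(lra)) as [d2 [H2 H2']].
  exists (Rmin d1 d2). split. apply Rmin_case; lra. intros x Hx.
  assert (x < d1 /\ x < d2) by (pose proof (Rmin_l d1 d2); pose proof (Rmin_r d1 d2); lra).
  specialize (H1' x ltac:(lra)). specialize (H2' x ltac:(lra)).
  pose proof (Rabs_triang (f x) (- g x)). rewrite Rabs_Ropp in H0. unfold Rminus. lra.
Qed.

Lemma W_upper : forall s, 0 < s -> W s <= lam * s ^ n / N.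
Proof.
  intros s Hs. pose proof Npos. pose proof lam_pos.
  cut (0 <= lam / N * s ^ n - W s). { intros. unfold Rdiv in *. nra. }
  apply (phi_nonneg (fun x => lam / N * x ^ n - W x)
    (fun x => lam / N * (N * x ^ (n - 1)) - lam * x ^ (n - 1) * Rpower (- v x) q) s Hs).
  - intros x Hx. apply D_minus. apply D_scal, D_pow. apply DW; lra.
  - intros x Hx. destruct (v_gt x ltac:(lra)). pose proof (Rpow_lt1 (- v x) ltac:(lra)).
    pose proof (pow_le x (n - 1) ltac:(lra)).
    replace (lam / N * (N * x ^ (n - 1)) - lam * x ^ (n - 1) * Rpower (- v x) q)
      with (lam * x ^ (n - 1) * (1 - Rpower (- v x) q)) by (field; lra).
    apply Rmult_le_pos; [apply Rmult_le_pos|]; lra.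
  - apply sum_small. apply small_pow. apply Rdiv_lt_0_compat; lra. apply W_lim.
Qed.

Lemma W_lower : forall s, 0 < s -> lam * s ^ n * Rpower (- v s) q / N <= W s.
Proof.
  intros s Hs. pose proof Npos. pose proof lam_pos. set (U := Rpower (- v s) q).
  assert (HU : 0 < U) by (unfold U, Rpower; apply exp_pos).
  cut (0 <= W s - lam * U / N * s ^ n). { intros. unfold Rdiv in *. nra. }
  apply (phi_nonneg (fun x => W x - lam * U / N * x ^ n)
    (fun x => lam * x ^ (n - 1) * Rpower (- v x) q - lam * U / N * (N * x ^ (n - 1))) s Hs).
  - intros x Hx. apply D_minus. apply DW; lra. apply D_scal, D_pow.
  - intros x Hx. pose proof (v_mono x s ltac:(lra) ltac:(lra)). destruct (v_gt x ltac:(lra)).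
    destruct (v_gt s Hs).
    assert (U <= Rpower (- v x) q).
    { unfold U, Rpower. apply exp_le_mono. apply Rmult_le_compat_l. destruct prm; pose proof HK1; lra.
      destruct (Req_dec (v x) (v s)) as [e|e]. rewrite e; lra. left; apply ln_increasing; lra. }
    pose proof (pow_le x (n - 1) ltac:(lra)).
    replace (lam * x ^ (n - 1) * Rpower (- v x) q - lam * U / N * (N * x ^ (n - 1)))
      with (lam * x ^ (n - 1) * (Rpower (- v x) q - U)) by (field; lra).
    apply Rmult_le_pos; [apply Rmult_le_pos|]; lra.
  - apply sum_small. apply W_lim. apply small_pow. apply Rdiv_lt_0_compat; [nra|lra].
Qed.

Let th := (A + ta) / (2 * A).

Lemma start : exists t0, forall t, t <= t0 -> eta t < zeta t /\ zeta t < th * eta t.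
Proof.
  pose proof Npos. pose proof lam_pos. pose proof Apos. pose proof Bpos. pose proof AB_N.
  destruct prm as [HqK [Hta [HtA _]]]. pose proof HK1.
  assert (HAN : A / N < 1) by (apply (Rmult_lt_reg_r N); auto; unfold Rdiv; rewrite Rmult_assoc, Rinv_l; lra).
  assert (HAN0 : 0 < A / N) by (apply Rdiv_lt_0_compat; lra).
  assert (Hth : 0 < th < 1).
  { unfold th. split. apply Rdiv_lt_0_compat; lra.
    apply (Rmult_lt_reg_r (2 * A)); [lra|]. unfold Rdiv; rewrite Rmult_assoc, Rinv_l; lra. }
  set (u0 := exp (ln (A / N) / q)).
  assert (Hu0 : u0 < 1).
  { unfold u0. rewrite <- exp_0. apply exp_increasing.
    assert (ln (A / N) < 0) by (rewrite <- ln_1; apply ln_increasing; lra).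
    unfold Rdiv at 1. assert (0 < / q) by (apply Rinv_0_lt_compat; lra). nra. }
  destruct (v_lim (1 - u0) ltac:(lra)) as [d [Hd Hd2]].
  set (LNA := ln (N / A)).
  exists (Rmin (ln d - 1) (- th * LNA / ((1 - th) * B))).
  intros t Ht. set (s := exp t).
  assert (Hs : 0 < s < d).
  { split. apply exp_pos. unfold s. rewrite <- (exp_ln d) by auto. apply exp_increasing.
    pose proof (Rmin_l (ln d - 1) (- th * LNA / ((1 - th) * B))). lra. }
  assert (Ht2 : t <= - th * LNA / ((1 - th) * B)) by (pose proof (Rmin_r (ln d - 1) (- th * LNA / ((1 - th) * B))); lra).
  destruct (v_gt s ltac:(lra)) as [Hv1 Hv2].
  specialize (Hd2 s Hs). apply Rabs_def2 in Hd2.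
  set (U := Rpower (- v s) q).
  assert (HU : A / N < U).
  { unfold U, Rpower. replace (A / N) with (exp (q * (ln (A / N) / q))).
    2:{ replace (q * (ln (A / N) / q)) with (ln (A / N)) by (field; lra). apply exp_ln; auto. }
    apply exp_increasing. apply Rmult_lt_compat_l. lra.
    replace (ln (A / N) / q) with (ln u0) by (unfold u0; rewrite ln_exp; auto).
    apply ln_increasing. unfold u0; apply exp_pos. lra. }
  assert (HU0 : 0 < U) by lra.
  pose proof (W_pos s ltac:(lra)) as HW. pose proof (W_upper s ltac:(lra)). pose proof (W_lower s ltac:(lra)).
  pose proof (ez t) as Ez. fold s in Ez. fold U in Ez.
  pose proof (pow_lt s n ltac:(lra)) as Hsn.
  assert (G1 : 1 < exp (zeta t - eta t)).
  { rewrite Ez. apply (Rmult_lt_reg_r (A * W s)). nra. unfold Rdiv. rewrite Rmult_assoc, Rinv_l by nra.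
    rewrite Rmult_1_l, Rmult_1_r.
    assert (A * W s <= A * (lam * s ^ n / N)) by (apply Rmult_le_compat_l; lra).
    assert (A * (lam * s ^ n / N) = lam * s ^ n * (A / N)) by (field; lra).
    assert (lam * s ^ n * (A / N) < lam * s ^ n * U) by (apply Rmult_lt_compat_l; nra). lra. }
  assert (G2 : exp (zeta t - eta t) <= N / A).
  { rewrite Ez. apply (Rmult_le_reg_r (A * W s)). nra. unfold Rdiv. rewrite Rmult_assoc, Rinv_l by nra.
    rewrite Rmult_1_r.
    assert (E3 : N * / A * (A * W s) = N * W s) by (field; lra). rewrite E3.
    fold U in H6. replace (lam * s ^ n * U) with (N * (lam * s ^ n * U / N)) by (field; lra).
    apply Rmult_le_compat_l; lra. }
  assert (Hlt : eta t < zeta t).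
  { assert (0 < zeta t - eta t). { rewrite <- exp_0 in G1. destruct (Rlt_or_le 0 (zeta t - eta t)) as [hh|hh]; auto.
      pose proof (exp_le_mono _ _ hh). lra. } lra. }
  split; auto.
  assert (Hze : zeta t - eta t <= LNA).
  { unfold LNA. rewrite <- (ln_exp (zeta t - eta t)).
    destruct (Req_dec (exp (zeta t - eta t)) (N / A)) as [e|e]. rewrite e; lra.
    left. apply ln_increasing. apply exp_pos. lra. }
  assert (Hzeta : zeta t < B * t).
  { unfold zeta. fold s. assert (ln (- v s) < 0) by (rewrite <- ln_1; apply ln_increasing; lra).
    assert (q * ln (- v s) < 0) by nra. lra. }
  assert ((1 - th) * B * t <= - th * LNA).
  { assert (0 < (1 - th) * B) by nra.
    apply Rmult_le_compat_l with (r := (1 - th) * B) in Ht2; [|lra].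
    replace ((1 - th) * B * (- th * LNA / ((1 - th) * B))) with (- th * LNA) in Ht2 by (field; lra). lra. }
  assert (zeta t - th * eta t = (1 - th) * zeta t + th * (zeta t - eta t)) by ring.
  assert ((1 - th) * zeta t < (1 - th) * (B * t)) by (apply Rmult_lt_compat_l; lra).
  assert (th * (zeta t - eta t) <= th * LNA) by (apply Rmult_le_compat_l; lra).
  lra.
Qed.

Lemma cond_th : B * (/ K - th * / q) <= A * th * (1 - th).
Proof.
  destruct prm as [HqK [Hta [HtA H8]]]. pose proof HK1. pose proof Apos.
  assert (E1 : B * (/ K - th * / q) = ta + 2 - ta * th).
  { assert (Eq : q * ta = K * ta + 2 * K) by (pose proof ta_q; nra).
    unfold B. replace (q * ta * (/ K - th * / q)) with ((q * ta) * / K - ta * th) by (field; lra).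
    rewrite Eq. field. lra. }
  rewrite E1. unfold th.
  assert (A * ((A + ta) / (2 * A)) * (1 - (A + ta) / (2 * A)) - (ta + 2 - ta * ((A + ta) / (2 * A)))
          = ((A - ta) ^ 2 - 8 * A) / (4 * A)) by (field; lra).
  assert (0 <= ((A - ta) ^ 2 - 8 * A) / (4 * A)) by (apply Rdiv_le_0_compat'; lra). lra.
Qed.

End PosBranch.

Lemma yfun_eq : forall t, yfun k q dv t = ta ^ k * exp (eta t).
Proof.
  intros t. set (s := exp t). assert (Hs : 0 < s) by apply exp_pos.
  pose proof (W_pos s Hs) as HW.
  destruct prm as [HqK [Hta _]].
  assert (E : eta t + K * ln ta = ln (W s) - A * t) by (unfold eta; fold s; ring).
  rewrite <- (exp_ln ta) at 1 by auto. unfold K in E. rewrite <- exp_pow, <- exp_plus, Rplus_comm, E.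
  unfold Rminus. rewrite exp_plus, exp_ln by auto.
  unfold yfun, W. fold s. rewrite Rpow_mult_distr.
  assert (E1 : s ^ k = exp (INR k * t)) by (unfold s; rewrite exp_pow; auto).
  assert (E2 : s ^ (n - k) = exp (INR (n - k) * t)) by (unfold s; rewrite exp_pow; auto).
  rewrite E1, E2. rewrite minus_INR by lia.
  assert (Ec : 2 * INR k ^ 2 / (q - INR k) = K * ta) by (unfold ta, tau; fold K; field; lra).
  rewrite Ec.
  replace (INR k * t) with ((INR n - INR k) * t + - (A * t) - K * ta * t) at 1.
  2:{ unfold A, N, K. ring. }
  unfold Rminus at 1. rewrite !exp_plus.
  assert (exp (- (K * ta * t)) * exp (K * ta * t) = 1)
    by (rewrite <- exp_plus; replace (- (K * ta * t) + K * ta * t) with 0 by ring; apply exp_0).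
  transitivity (exp ((INR n - INR k) * t) * dv s ^ k * exp (- (A * t)) * (exp (- (K * ta * t)) * exp (K * ta * t))).
  ring. rewrite H. ring.
Qed.

Lemma zfun_eq : forall t, zfun k n q v t = lam * exp (zeta t).
Proof.
  intros t. destruct prm as [HqK [Hta _]]. unfold zfun, zeta, Rpower. fold lam.
  rewrite exp_plus. replace (2 * INR k * q / (q - INR k)) with B.
  ring. unfold B, ta, tau. fold K. field. lra.
Qed.

Lemma target_eq : (q - INR k) / acoef k n q * lamt k n q = ta ^ k.
Proof.
  destruct prm as [HqK [Hta _]]. pose proof Apos.
  assert (Ea : acoef k n q = A * (q - K)).
  { unfold acoef. fold K N. unfold A.
    replace ((N - 2 * K - K * ta) * (q - K)) with ((N - 2 * K) * (q - K) - K * (ta * (q - K))) by ring.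
    rewrite ta_q. ring. }
  rewrite Ea. fold lam. rewrite lam_eq. fold K. field. split; lra.
Qed.

Lemma main_sec :
  (exists f : R -> R,
     (forall t, zfun k n q v t = f (yfun k q dv t)) /\
     (forall t1 t2, yfun k q dv t1 < yfun k q dv t2 ->
        f (yfun k q dv t1) < f (yfun k q dv t2))) /\
  lim_pinfty (yfun k q dv) ((q - INR k) / acoef k n q * lamt k n q) /\
  lim_pinfty (zfun k n q v) (lamt k n q).
Proof.
  destruct prm as [HqK [Hta [HtA H8]]]. pose proof HK1. pose proof Apos. pose proof Bpos.
  assert (Hk2 : 0 < / q) by (apply Rinv_0_lt_compat; lra).
  assert (Hk12 : / q < / K) by (apply Rinv_lt_contravar; nra).
  destruct dv_sign as [Hp|Hneg].
  2:{ exfalso. apply (core_neg eta zeta A B (/ K) (/ q)); auto. apply Deta_ok. apply Dzeta_neg; auto. }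
  set (th := (A + ta) / (2 * A)).
  assert (Hth : 0 < th < 1).
  { unfold th. split. apply Rdiv_lt_0_compat; lra.
    apply (Rmult_lt_reg_r (2 * A)); [lra|]. unfold Rdiv; rewrite Rmult_assoc, Rinv_l; lra. }
  assert (Reg : forall t, eta t < zeta t /\ zeta t < th * eta t).
  { apply (core_pos_inv eta zeta A B (/ K) (/ q) th); auto; try lra.
    apply cond_th; auto. apply Deta_ok. apply Dzeta_pos; auto. apply start; auto. }
  destruct (core_pos_all eta zeta A B (/ K) (/ q) th) as [P1 [P2 Lim]]; auto; try lra.
  apply Deta_ok. apply Dzeta_pos; auto.
  assert (Etainc : forall t1 t2, t1 < t2 -> eta t1 < eta t2)
    by (intros; apply (incr_strict eta (fun t => A * (exp (zeta t - eta t) - 1))); auto; intros; first [apply Deta_ok|apply P1]).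
  assert (Zetainc : forall t1 t2, t1 < t2 -> zeta t1 < zeta t2)
    by (intros; apply (incr_strict zeta (fun t => B * (1 - exp (/ K * eta t - / q * zeta t)))); auto;
        intros; first [apply Dzeta_pos; auto|apply P2]).
  pose proof (pow_lt ta k Hta) as Htk. pose proof lam_pos.
  assert (Yinc : forall t1 t2, t1 < t2 -> yfun k q dv t1 < yfun k q dv t2).
  { intros. rewrite !yfun_eq. apply Rmult_lt_compat_l; auto. apply exp_increasing; auto. }
  assert (Zinc : forall t1 t2, t1 < t2 -> zfun k n q v t1 < zfun k n q v t2).
  { intros. rewrite !zfun_eq. apply Rmult_lt_compat_l; auto. apply exp_increasing; auto. }
  assert (Yinj : forall t1 t2, yfun k q dv t1 = yfun k q dv t2 -> t1 = t2).
  { intros t1 t2 E. destruct (Rtotal_order t1 t2) as [h|[h|h]]; auto.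
    specialize (Yinc _ _ h); lra. specialize (Yinc _ _ h); lra. }
  split; [|split].
  - exists (fun y0 => zfun k n q v (ClassicalEpsilon.epsilon (inhabits 0) (fun t => yfun k q dv t = y0))).
    assert (Hf : forall t, zfun k n q v t =
        zfun k n q v (ClassicalEpsilon.epsilon (inhabits 0) (fun t' => yfun k q dv t' = yfun k q dv t))).
    { intros t. f_equal. apply Yinj.
      symmetry. apply (ClassicalEpsilon.epsilon_spec (inhabits 0) (fun t' => yfun k q dv t' = yfun k q dv t)).
      exists t; auto. }
    split.
    + intros t. apply Hf.
    + intros t1 t2 Hy. rewrite <- !Hf. apply Zinc.
      destruct (Rlt_or_le t1 t2) as [h|h]; auto. exfalso.
      destruct (Req_dec t1 t2) as [e|e]. subst; lra. specialize (Yinc t2 t1 ltac:(lra)). lra.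
  - rewrite target_eq. intros eps He.
    set (e' := Rmin (1/2) (eps / (2 * ta ^ k))).
    assert (He' : 0 < e') by (unfold e'; apply Rmin_case; [lra|apply Rdiv_lt_0_compat; lra]).
    destruct (Lim e' He') as [T HT]. exists T. intros t Ht. destruct (HT t Ht) as [Q1 _].
    rewrite yfun_eq. replace (ta ^ k * exp (eta t) - ta ^ k) with (ta ^ k * (exp (eta t) - 1)) by ring.
    rewrite Rabs_mult, (Rabs_right (ta ^ k)) by lra.
    assert (Q2 : Rabs (eta t) <= 1/2) by (pose proof (Rmin_l (1/2) (eps / (2 * ta ^ k))); unfold e' in Q1; lra).
    pose proof (exp_near (eta t) Q2).
    assert (Rabs (eta t) < eps / (2 * ta ^ k)) by (pose proof (Rmin_r (1/2) (eps / (2 * ta ^ k))); unfold e' in Q1; lra).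
    assert (ta ^ k * Rabs (exp (eta t) - 1) <= ta ^ k * (2 * Rabs (eta t))) by (apply Rmult_le_compat_l; lra).
    assert (Q6 : ta ^ k * (2 * Rabs (eta t)) < ta ^ k * (2 * (eps / (2 * ta ^ k)))) by (apply Rmult_lt_compat_l; lra).
    replace (ta ^ k * (2 * (eps / (2 * ta ^ k)))) with eps in Q6 by (field; lra). lra.
  - fold lam. intros eps He.
    set (e' := Rmin (1/2) (eps / (2 * lam))).
    assert (He' : 0 < e') by (unfold e'; apply Rmin_case; [lra|apply Rdiv_lt_0_compat; lra]).
    destruct (Lim e' He') as [T HT]. exists T. intros t Ht. destruct (HT t Ht) as [_ Q1].
    rewrite zfun_eq. replace (lam * exp (zeta t) - lam) with (lam * (exp (zeta t) - 1)) by ring.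
    rewrite Rabs_mult, (Rabs_right lam) by lra.
    assert (Q2 : Rabs (zeta t) <= 1/2) by (pose proof (Rmin_l (1/2) (eps / (2 * lam))); unfold e' in Q1; lra).
    pose proof (exp_near (zeta t) Q2).
    assert (Rabs (zeta t) < eps / (2 * lam)) by (pose proof (Rmin_r (1/2) (eps / (2 * lam))); unfold e' in Q1; lra).
    assert (lam * Rabs (exp (zeta t) - 1) <= lam * (2 * Rabs (zeta t))) by (apply Rmult_le_compat_l; lra).
    assert (Q6 : lam * (2 * Rabs (zeta t)) < lam * (2 * (eps / (2 * lam)))) by (apply Rmult_lt_compat_l; lra).
    replace (lam * (2 * (eps / (2 * lam)))) with eps in Q6 by (field; lra). lra.
Qed.

End Bridge.

Theorem lemma6 (k n : nat) (q : R) (v dv d2v : R -> R) :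
  (1 <= k)%nat -> (2 * k + 8 < n)%nat -> qJL k n <= q ->
  is_global_solution k n q v dv d2v ->
  (exists f : R -> R,
     (* the orbit {(y t, z t)} is the graph of f over the range of y *)
     (forall t, zfun k n q v t = f (yfun k q dv t)) /\
     (* f is increasing on that range *)
     (forall t1 t2, yfun k q dv t1 < yfun k q dv t2 ->
        f (yfun k q dv t1) < f (yfun k q dv t2))) /\
  lim_pinfty (yfun k q dv) ((q - INR k) / acoef k n q * lamt k n q) /\
  lim_pinfty (zfun k n q v) (lamt k n q).
Proof.
  intros Hk Hn Hq Hsol. exact (main_sec k n q v dv d2v Hk Hn Hq Hsol).
Qed.
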